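(* Let $H$ be a $k$-linear semi-Hopf category, $A$ a right $H$-comodule category and $B=A^{{\rm co}H}$. For $x,y,z\in X$ let ${\rm can}'^{y}_{zx}:A_{zx}\otimes_{B_x}A_{xy}\to A_{zy}\otimes H_{zx}$, ${\rm can}'^{y}_{zx}(a\otimes_{B_x}a')=a_{[0]}a'\otimes a_{[1]}$. The following are equivalent: (1) ${\rm can}'^{y}_{zx}$ is bijective for all $x,y,z\in X$; (2) for all $x,z\in X$, ${\rm can}'^{z}_{zx}$ is bijective and ${\rm can}'^{x}_{zx}$ has a left inverse; (3) for all $x,z\in X$ there is a $k$-linear map $\gamma'_{zx}:H_{zx}\to A_{zx}\otimes_{B_x}A_{xz}$, $\gamma'_{zx}(h)=\sum_i l'_i(h)\otimes_{B_x}r'_i(h)$, such that for all $h\in H_{zx}$ and $a\in A_{zx}$: $$\sum_i l'_i(h)_{[0]}r'_i(h)\otimes l'_i(h)_{[1]}=1_z\otimes h,\qquad\sum_i l'_i(a_{[1]})\otimes_{B_x}r'_i(a_{[1]})a_{[0]}=a\otimes_{B_x}1_x.$$ (When these hold, $A$ is called an $H$-Galois' category extension of $B$.)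
   Context: Let $k$ be a commutative ring; unadorned $\otimes$ is over $k$. A $k$-linear category $A$ with class of objects $X$ consists of $k$-modules $A_{xy}$, associative compositions $A_{xy}\otimes A_{yz}\to A_{xz}$, $a\otimes b\mapsto ab$, and units $1_x\in A_{xx}$. A $k$-linear semi-Hopf category $H$ (objects $X$) is a $k$-linear category in which each $H_{xy}$ is a $k$-coalgebra with $\Delta_{xy}(h)=h_{(1)}\otimes h_{(2)}$ and counit $\varepsilon_{xy}$, such that $\Delta_{xz}(hh')=h_{(1)}h'_{(1)}\otimes h_{(2)}h'_{(2)}$, $\Delta_{xx}(1_x)=1_x\otimes1_x$, $\varepsilon_{xz}(hh')=\varepsilon_{xy}(h)\varepsilon_{yz}(h')$, $\varepsilon_{xx}(1_x)=1$. A right $H$-comodule category is a $k$-linear category $A$ with objects $X$ such that each $A_{xy}$ is a right $H_{xy}$-comodule, $\rho_{xy}(a)=a_{[0]}\otimes a_{[1]}$, with $\rho_{xz}(ab)=a_{[0]}b_{[0]}\otimes a_{[1]}b_{[1]}$ and $\rho_{xx}(1_x)=1_x\otimes1_x$. Its coinvariants are the $k$-algebras $B_x=\{a\in A_{xx}\mid\rho_{xx}(a)=a\otimes1_x\}$; $A_{xy}$ is a $B_x$-$B_y$-bimodule by multiplication. *)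

(* Defs.v *)
From HB Require Import structures.
From mathcomp Require Import all_boot all_order all_algebra.
From mathcomp Require Import generic_quotient.
From Stdlib Require Import ClassicalEpsilon.
Set Implicit Arguments. Unset Strict Implicit. Unset Printing Implicit Defensive.
Import GRing.Theory.
Local Open Scope ring_scope.
Local Open Scope quotient_scope.

Section Tensor.
Variables (k : comPzRingType) (U V : lmodType k) (I : Type)
  (bl : I -> U -> U) (br : I -> V -> V).

Definition bal_bilinear (W : lmodType k) (f : U -> V -> W) : Prop :=
  [/\ (forall a u u' v, f (a *: u + u') v = a *: f u v + f u' v),
      (forall a u v v', f u (a *: v + v') = a *: f u v + f u v') &
      (forall i u v, f (bl i u) v = f u (br i v))].

Definition fsum (W : lmodType k) (f : U -> V -> W) (s : seq (U * V)) : W :=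
  \sum_(p <- s) f p.1 p.2.

Definition tens_rel (s t : seq (U * V)) : Prop :=
  forall (W : lmodType k) (f : U -> V -> W), bal_bilinear f -> fsum f s = fsum f t.

Definition trel (s t : seq (U * V)) : bool :=
  if excluded_middle_informative (tens_rel s t) then true else false.

Lemma trelP s t : reflect (tens_rel s t) (trel s t).
Proof. by rewrite /trel; case: excluded_middle_informative => H; constructor. Qed.

Lemma trel_refl : reflexive trel.
Proof. by move=> s; apply/trelP. Qed.
Lemma trel_sym : symmetric trel.
Proof.
by move=> s t; apply/trelP/trelP => H W f Hf; rewrite H.
Qed.
Lemma trel_trans : transitive trel.
Proof.
by move=> t s u /trelP H1 /trelP H2; apply/trelP => W f Hf; rewrite H1 ?H2.
Qed.

Canonical trel_equiv := EquivRel trel trel_refl trel_sym trel_trans.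

Definition tensor := {eq_quot trel}.
HB.instance Definition _ : EqQuotient _ trel tensor := EqQuotient.on tensor.
HB.instance Definition _ := Choice.on tensor.

Lemma fsum_repr (W : lmodType k) (f : U -> V -> W) s :
  bal_bilinear f -> fsum f (repr (\pi_tensor s)) = fsum f s.
Proof.
move=> Hf; have /eqquotP/trelP H : repr (\pi_tensor s) = s %[mod tensor].
  by rewrite reprK.
exact: H.
Qed.

Lemma fsum_cat (W : lmodType k) (f : U -> V -> W) s t :
  fsum f (s ++ t) = fsum f s + fsum f t.
Proof. by rewrite /fsum big_cat. Qed.

Definition tzero : tensor := \pi_tensor [::].
Definition tadd (x y : tensor) : tensor := \pi_tensor (repr x ++ repr y).
Definition topp (x : tensor) : tensor :=
  \pi_tensor (map (fun p => (- p.1, p.2)) (repr x)).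
Definition tscale (a : k) (x : tensor) : tensor :=
  \pi_tensor (map (fun p => (a *: p.1, p.2)) (repr x)).

Section BalLemmas.
Variables (W : lmodType k) (f : U -> V -> W).
Hypothesis Hf : bal_bilinear f.
Lemma bb0l v : f 0 v = 0.
Proof.
case: Hf => H1 _ _; have := H1 1 0 0 v; rewrite !scale1r addr0 => H.
by apply: (addrI (f 0 v)); rewrite -H addr0.
Qed.
Lemma bbZl a u v : f (a *: u) v = a *: f u v.
Proof. by case: Hf => H1 _ _; have := H1 a u 0 v; rewrite addr0 bb0l addr0. Qed.
Lemma bbDl u u' v : f (u + u') v = f u v + f u' v.
Proof. by case: Hf => H1 _ _; have := H1 1 u u' v; rewrite !scale1r. Qed.
Lemma bbNl u v : f (- u) v = - f u v.
Proof. by rewrite -scaleN1r bbZl scaleN1r. Qed.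
End BalLemmas.

Lemma fsum_map_scale (W : lmodType k) (f : U -> V -> W) a s :
  bal_bilinear f -> fsum f (map (fun p => (a *: p.1, p.2)) s) = a *: fsum f s.
Proof.
move=> Hf; rewrite /fsum big_map scaler_sumr; apply: eq_bigr => p _ /=.
exact: bbZl.
Qed.

Lemma fsum_map_opp (W : lmodType k) (f : U -> V -> W) s :
  bal_bilinear f -> fsum f (map (fun p => (- p.1, p.2)) s) = - fsum f s.
Proof.
move=> Hf; rewrite /fsum big_map -sumrN; apply: eq_bigr => p _ /=.
exact: bbNl.
Qed.

Ltac teq := apply/eqquotP/trelP => W f Hf;
  rewrite ?(fsum_cat, fsum_repr, fsum_map_scale, fsum_map_opp, fsum_repr) //.

Lemma taddA : associative tadd.
Proof.
move=> x y z; rewrite /tadd; teq.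
by rewrite addrA.
Qed.
Lemma taddC : commutative tadd.
Proof. by move=> x y; rewrite /tadd; teq; rewrite addrC. Qed.
Lemma tadd0 : left_id tzero tadd.
Proof.
move=> x; rewrite /tadd /tzero -[RHS]reprK; teq.
by rewrite /fsum big_nil add0r.
Qed.
Lemma taddN : left_inverse tzero topp tadd.
Proof.
move=> x; rewrite /tadd /topp /tzero; teq.
by rewrite ?(fsum_map_opp, fsum_repr) // addNr /fsum big_nil.
Qed.

HB.instance Definition _ := GRing.isZmodule.Build tensor taddA taddC tadd0 taddN.

Lemma tscaleA a b x : tscale a (tscale b x) = tscale (a * b) x.
Proof.
rewrite /tscale; teq; by rewrite ?(fsum_map_scale, fsum_repr) // scalerA.
Qed.
Lemma tscale1 : left_id 1 tscale.
Proof.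
move=> x; rewrite /tscale -[RHS]reprK; teq.
by rewrite scale1r.
Qed.
Lemma tscaleDr : right_distributive tscale +%R.
Proof.
move=> a x y; rewrite /tscale /GRing.add /= /tadd; teq.
by rewrite ?(fsum_map_scale, fsum_cat, fsum_repr) // scalerDr.
Qed.
Lemma tscaleDl x : {morph tscale^~ x : a b / a + b}.
Proof.
move=> a b; rewrite /tscale /GRing.add /= /tadd; teq.
by rewrite ?(fsum_map_scale, fsum_cat, fsum_repr) // scalerDl.
Qed.

HB.instance Definition _ :=
  GRing.Zmodule_isLmodule.Build k tensor tscaleA tscale1 tscaleDr tscaleDl.

Definition tmul (u : U) (v : V) : tensor := \pi_tensor [:: (u, v)].
Definition tlift (W : lmodType k) (f : U -> V -> W) (t : tensor) : W :=
  fsum f (repr t).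

End Tensor.

Arguments tensor {k} U V {I} bl br.
Arguments tmul {k U V I bl br} u v.
Arguments tlift {k U V I bl br W} f t.

(* Tensor product over k : no balancing condition beyond k-bilinearity.     *)
Definition ktensor (k : comPzRingType) (U V : lmodType k) : lmodType k :=
  tensor U V (fun (_ : unit) (u : U) => u) (fun (_ : unit) (v : V) => v).
Definition ktmul (k : comPzRingType) (U V : lmodType k) (u : U) (v : V)
  : ktensor U V := tmul u v.
Arguments ktmul {k U V} u v.

(* kcomp a b = "ab" for a in A_xy, b in A_yz (so ab in A_xz).                *)
Record kcat (k : comPzRingType) (X : Type) := KCat {
  hom :> X -> X -> lmodType k;
  kcomp : forall x y z : X, hom x y -> hom y z -> hom x z;
  idm : forall x : X, hom x x;
  comp_linl : forall x y z (c : k) (a a' : hom x y) (b : hom y z),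
    kcomp (c *: a + a') b = c *: kcomp a b + kcomp a' b;
  comp_linr : forall x y z (c : k) (a : hom x y) (b b' : hom y z),
    kcomp a (c *: b + b') = c *: kcomp a b + kcomp a b';
  compA : forall x y z w (a : hom x y) (b : hom y z) (c : hom z w),
    kcomp (kcomp a b) c = kcomp a (kcomp b c);
  comp1l : forall x y (a : hom x y), kcomp (idm x) a = a;
  comp1r : forall x y (a : hom x y), kcomp a (idm y) = a
}.
Arguments kcomp {k X} _ {x y z} _ _.
Arguments idm {k X} _ _.

(* Sweedler notation  sum f(h_(1), h_(2))  is  tlift f (cop h).             *)
Record semiHopfCat (k : comPzRingType) (X : Type) := SemiHopfCat {
  hcat :> kcat k X;
  cop : forall x y : X, hcat x y -> ktensor (hcat x y) (hcat x y);
  cou : forall x y : X, hcat x y -> k;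
  cop_lin : forall x y (c : k) (h h' : hcat x y),
    cop (c *: h + h') = c *: cop h + cop h';
  cou_lin : forall x y (c : k) (h h' : hcat x y),
    cou (c *: h + h') = c * cou h + cou h';
  coassoc : forall x y (h : hcat x y),
    tlift (fun h1 h2 => tlift (fun h11 h12 => ktmul h11 (ktmul h12 h2)) (cop h1))
          (cop h)
    = tlift (fun h1 h2 => ktmul h1 (cop h2)) (cop h);
  counitl : forall x y (h : hcat x y), tlift (fun h1 h2 => cou h1 *: h2) (cop h) = h;
  counitr : forall x y (h : hcat x y), tlift (fun h1 h2 => cou h2 *: h1) (cop h) = h;
  cop_comp : forall x y z (h : hcat x y) (h' : hcat y z),
    cop (kcomp hcat h h')
    = tlift (fun h1 h2 => tlift (fun h1' h2' =>
                 ktmul (kcomp hcat h1 h1') (kcomp hcat h2 h2')) (cop h')) (cop h);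
  cop_id : forall x, cop (idm hcat x) = ktmul (idm hcat x) (idm hcat x);
  cou_comp : forall x y z (h : hcat x y) (h' : hcat y z),
    cou (kcomp hcat h h') = cou h * cou h';
  cou_id : forall x, cou (idm hcat x) = 1
}.
Arguments cop {k X} _ {x y} _.
Arguments cou {k X} _ {x y} _.

Record comodCat (k : comPzRingType) (X : Type) (H : semiHopfCat k X) := ComodCat {
  acat :> kcat k X;
  rho : forall x y : X, acat x y -> ktensor (acat x y) (H x y);
  rho_lin : forall x y (c : k) (a a' : acat x y),
    rho (c *: a + a') = c *: rho a + rho a';
  rho_coassoc : forall x y (a : acat x y),
    tlift (fun a0 a1 => tlift (fun a00 a01 => ktmul a00 (ktmul a01 a1)) (rho a0))
          (rho a)
    = tlift (fun a0 a1 => ktmul a0 (cop H a1)) (rho a);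
  rho_counit : forall x y (a : acat x y),
    tlift (fun a0 a1 => cou H a1 *: a0) (rho a) = a;
  rho_comp : forall x y z (a : acat x y) (b : acat y z),
    rho (kcomp acat a b)
    = tlift (fun a0 a1 => tlift (fun b0 b1 =>
                 ktmul (kcomp acat a0 b0) (kcomp H a1 b1)) (rho b)) (rho a);
  rho_id : forall x, rho (idm acat x) = ktmul (idm acat x) (idm H x)
}.
Arguments rho {k X H} _ {x y} _.

Definition coinv (k : comPzRingType) (X : Type) (H : semiHopfCat k X)
  (A : comodCat H) (x : X) (b : A x x) : Prop :=
  rho A b = ktmul b (idm H x).

Definition btensor (k : comPzRingType) (X : Type) (H : semiHopfCat k X)
  (A : comodCat H) (z x y : X) : lmodType k :=
  tensor (A z x) (A x y)
    (fun (b : {b : A x x | @coinv k X H A x b}) (a : A z x) => kcomp A a (proj1_sig b))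
    (fun (b : {b : A x x | @coinv k X H A x b}) (a' : A x y) => kcomp A (proj1_sig b) a').

Definition btmul (k : comPzRingType) (X : Type) (H : semiHopfCat k X)
  (A : comodCat H) (z x y : X) (a : A z x) (a' : A x y) : btensor A z x y :=
  tmul a a'.
Arguments btmul {k X H A z x y} a a'.

Definition canp (k : comPzRingType) (X : Type) (H : semiHopfCat k X)
  (A : comodCat H) (z x y : X) (t : btensor A z x y) : ktensor (A z y) (H z x) :=
  tlift (fun (a : A z x) (a' : A x y) =>
           tlift (fun (a0 : A z x) (a1 : H z x) => ktmul (kcomp A a0 a') a1) (rho A a))
        t.
Arguments canp {k X H} A z x y _.
Arguments btensor {k X H} A z x y.
Arguments coinv {k X H} A {x} _.

(* Main.v *)
Require Import Defs.
From HB Require Import structures.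
From mathcomp Require Import all_boot all_order all_algebra.
From mathcomp Require Import generic_quotient.
Set Implicit Arguments. Unset Strict Implicit. Unset Printing Implicit Defensive.
Import GRing.Theory.
Local Open Scope ring_scope.
Definition linP (k : comPzRingType) (M N : lmodType k) (g : M -> N) :=
  forall c x y, g (c *: x + y) = c *: g x + g y.

Lemma linP0 (k : comPzRingType) (M N : lmodType k) (g : M -> N) : linP g -> g 0 = 0.
Proof.
move=> Hg; have := Hg 1 0 0; rewrite !scale1r addr0 => H.
by apply: (addrI (g 0)); rewrite -H addr0.
Qed.
Lemma linPD (k : comPzRingType) (M N : lmodType k) (g : M -> N) : linP g ->
  forall x y, g (x + y) = g x + g y.
Proof. by move=> Hg x y; have := Hg 1 x y; rewrite !scale1r. Qed.
Lemma linPZ (k : comPzRingType) (M N : lmodType k) (g : M -> N) : linP g ->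
  forall c x, g (c *: x) = c *: g x.
Proof. by move=> Hg c x; have := Hg c x 0; rewrite !addr0 linP0 // addr0. Qed.

Section Gen.
Variables (k : comPzRingType) (U V : lmodType k) (I : Type)
  (bl : I -> U -> U) (br : I -> V -> V).
Local Notation T := (tensor U V bl br).

Lemma tensor_eq (t t' : T) :
  (forall (W : lmodType k) (f : U -> V -> W), bal_bilinear bl br f ->
     tlift f t = tlift f t') -> t = t'.
Proof.
move=> H; rewrite -[t]reprK -[t']reprK; apply/eqquotP/trelP => W f Hf; exact: H.
Qed.

Section F.
Variables (W : lmodType k) (f : U -> V -> W).
Hypothesis Hf : bal_bilinear bl br f.

Lemma tlift_tmul u v : tlift f (tmul u v : T) = f u v.
Proof. by rewrite /tlift /tmul fsum_repr // /fsum big_seq1. Qed.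

Lemma tlift_add (t t' : T) : tlift f (t + t') = tlift f t + tlift f t'.
Proof. by rewrite {1}/GRing.add /= /tadd /tlift fsum_repr // fsum_cat. Qed.

Lemma tlift_scale c (t : T) : tlift f (c *: t) = c *: tlift f t.
Proof. by rewrite {1}/GRing.scale /= /tscale /tlift fsum_repr //; erewrite fsum_map_scale; last exact: Hf. Qed.

Lemma tlift_lin : linP (tlift f : T -> W).
Proof. by move=> c t t'; rewrite tlift_add tlift_scale. Qed.
End F.

Lemma tlift_comp (W W' : lmodType k) (f : U -> V -> W) (g : W -> W') (t : T) :
  linP g -> g (tlift f t) = tlift (fun u v => g (f u v)) t.
Proof.
move=> Hg; rewrite /tlift /fsum; elim: (repr t) => [|p s IH].
  by rewrite !big_nil linP0.
by rewrite !big_cons linPD // IH.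
Qed.

Lemma tlift_ext (W : lmodType k) (f f' : U -> V -> W) (t : T) :
  (forall u v, f u v = f' u v) -> tlift f t = tlift f' t.
Proof. by move=> E; rewrite /tlift /fsum; apply: eq_bigr => p _; rewrite E. Qed.

Lemma tlift_linf (W : lmodType k) (c : k) (f f' : U -> V -> W) (t : T) :
  tlift (fun u v => c *: f u v + f' u v) t = c *: tlift f t + tlift f' t.
Proof. by rewrite /tlift /fsum big_split /= scaler_sumr. Qed.

Lemma tmul_bal : bal_bilinear bl br (fun u v => tmul u v : T).
Proof.
split.
- move=> a u u' v; apply: tensor_eq => W f Hf.
  by rewrite tlift_add // tlift_scale // !tlift_tmul //; case: Hf.
- move=> a u v v'; apply: tensor_eq => W f Hf.
  by rewrite tlift_add // tlift_scale // !tlift_tmul //; case: Hf.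
- move=> i u v; apply: tensor_eq => W f Hf.
  by rewrite !tlift_tmul //; case: Hf.
Qed.

Lemma tmulDl a u u' v : (tmul (a *: u + u') v : T) = a *: tmul u v + tmul u' v.
Proof. by case: tmul_bal. Qed.
Lemma tmulDr a u v v' : (tmul u (a *: v + v') : T) = a *: tmul u v + tmul u v'.
Proof. by case: tmul_bal. Qed.
Lemma tmulB i u v : (tmul (bl i u) v : T) = tmul u (br i v).
Proof. by case: tmul_bal. Qed.

Lemma tlift_tmulK (t : T) : tlift (fun u v => tmul u v : T) t = t.
Proof.
apply: tensor_eq => W f Hf.
rewrite tlift_comp; last exact: tlift_lin.
by apply: tlift_ext => u v; rewrite tlift_tmul.
Qed.
End Gen.

Lemma kbal (k : comPzRingType) (U V W : lmodType k) (f : U -> V -> W) :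
  (forall a u u' v, f (a *: u + u') v = a *: f u v + f u' v) ->
  (forall a u v v', f u (a *: v + v') = a *: f u v + f u v') ->
  bal_bilinear (fun (_ : unit) (u : U) => u) (fun (_ : unit) (v : V) => v) f.
Proof. by move=> H1 H2; split. Qed.
Section Main.
Variables (k : comPzRingType) (X : Type) (H : semiHopfCat k X) (A : comodCat H).

Lemma ktmul_bal (U V : lmodType k) :
  bal_bilinear (fun (_ : unit) (u : U) => u) (fun (_ : unit) (v : V) => v)
    (fun u v => ktmul u v).
Proof. exact: tmul_bal. Qed.

Lemma ktmulDl (U V : lmodType k) a (u u' : U) (v : V) :
  ktmul (a *: u + u') v = a *: ktmul u v + ktmul u' v.
Proof. exact: tmulDl. Qed.
Lemma ktmulDr (U V : lmodType k) a (u : U) (v v' : V) :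
  ktmul u (a *: v + v') = a *: ktmul u v + ktmul u v'.
Proof. exact: tmulDr. Qed.

Definition gfun z w y x (c : A w y) (b : A z w) (h : H z x) : ktensor (A z y) (H z x) :=
  ktmul (kcomp A b c) h.

Lemma gfun_bal z w y x (c : A w y) :
  bal_bilinear (fun (_ : unit) (u : A z w) => u) (fun (_ : unit) (v : H z x) => v)
    (gfun c).
Proof.
apply: kbal => a u u' v; rewrite /gfun ?comp_linl ?ktmulDl ?ktmulDr //.
Qed.

Definition Gact z w y x (c : A w y) (t : ktensor (A z w) (H z x)) :
  ktensor (A z y) (H z x) := tlift (gfun c) t.

Definition fcan z x y (a : A z x) (a' : A x y) : ktensor (A z y) (H z x) :=
  tlift (gfun a') (rho A a).

Lemma canpE z x y (t : btensor A z x y) : canp A z x y t = tlift (@fcan z x y) t.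
Proof. by []. Qed.

Lemma rho_coinv x (b : A x x) : coinv A b -> rho A b = ktmul b (idm H x).
Proof. by []. Qed.

Lemma fcan_bal z x y :
  bal_bilinear
    (fun (b : {b : A x x | coinv A b}) (a : A z x) => kcomp A a (proj1_sig b))
    (fun (b : {b : A x x | coinv A b}) (a' : A x y) => kcomp A (proj1_sig b) a')
    (@fcan z x y).
Proof.
split.
- move=> c a a2 a'; rewrite /fcan rho_lin tlift_lin //; exact: gfun_bal.
- move=> c a a' a''; rewrite /fcan -tlift_linf; apply: tlift_ext => u v.
  by rewrite /gfun comp_linr ktmulDl.
- move=> [b Hb] a a' /=; rewrite /fcan rho_comp.
  rewrite (tlift_ext (f' := fun a0 a1 => ktmul (kcomp A a0 b) a1)); last first.
    move=> u v; rewrite Hb tlift_tmul; last first.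
      by apply: kbal => ? ? ? ?; rewrite ?comp_linl ?comp_linr ?ktmulDl ?ktmulDr.
    by rewrite comp1r.
  rewrite tlift_comp; last by apply: tlift_lin; exact: gfun_bal.
  apply: tlift_ext => u v; rewrite tlift_tmul; last exact: gfun_bal.
  by rewrite /gfun (@Defs.compA _ _ (acat A)).
Qed.

Lemma canp_tmul z x y (a : A z x) (a' : A x y) :
  canp A z x y (btmul a a') = fcan a a'.
Proof. by rewrite canpE /btmul tlift_tmul //; exact: fcan_bal. Qed.

Lemma canp_lin z x y : linP (canp A z x y).
Proof. exact: (tlift_lin (fcan_bal z x y)). Qed.

Lemma Gact_lin z w y x (c : A w y) : linP (@Gact z w y x c).
Proof. exact: (tlift_lin (gfun_bal _ _ c)). Qed.

Definition rfun z x w y (c : A w y) (l : A z x) (r : A x w) : btensor A z x y :=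
  btmul l (kcomp A r c).

Lemma rfun_bal z x w y (c : A w y) :
  bal_bilinear
    (fun (b : {b : A x x | coinv A b}) (a : A z x) => kcomp A a (proj1_sig b))
    (fun (b : {b : A x x | coinv A b}) (a' : A x w) => kcomp A (proj1_sig b) a')
    (rfun c).
Proof.
split.
- by move=> a u u' v; rewrite /rfun /btmul tmulDl.
- by move=> a u v v'; rewrite /rfun /btmul comp_linl tmulDr.
- move=> i u v; rewrite /rfun /btmul (@Defs.compA _ _ (acat A)).
  exact: (@tmulB _ _ _ _ (fun (b : {b : A x x | coinv A b}) (a : A z x) => kcomp A a (proj1_sig b))
      (fun (b : {b : A x x | coinv A b}) (a' : A x y) => kcomp A (proj1_sig b) a')).
Qed.

Definition Ract z x w y (c : A w y) (t : btensor A z x w) : btensor A z x y :=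
  tlift (rfun c) t.

Lemma Ract_lin z x w y (c : A w y) : linP (@Ract z x w y c).
Proof. exact: (tlift_lin (rfun_bal _ _ c)). Qed.

Lemma Ract_tmul z x w y (c : A w y) (l : A z x) r : Ract c (btmul l r) = btmul l (kcomp A r c).
Proof. by rewrite /Ract /btmul tlift_tmul //; exact: rfun_bal. Qed.

Lemma Ract_linc z x w y d (c c' : A w y) (t : btensor A z x w) :
  Ract (d *: c + c') t = d *: Ract c t + Ract c' t.
Proof.
rewrite /Ract -tlift_linf; apply: tlift_ext => u v.
by rewrite /rfun comp_linr /btmul tmulDr.
Qed.

Lemma Ract_comp z x w y v (c : A w y) (c' : A y v) (t : btensor A z x w) :
  Ract c' (Ract c t) = Ract (kcomp A c c') t.
Proof.
rewrite {1}/Ract tlift_comp; last exact: Ract_lin.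
apply: tlift_ext => u r; rewrite /rfun tlift_tmul; last exact: rfun_bal.
by rewrite (@Defs.compA _ _ (acat A)).
Qed.

Lemma Ract1 z x w (t : btensor A z x w) : Ract (idm A w) t = t.
Proof.
rewrite -[RHS]tlift_tmulK; apply: tlift_ext => u r; by rewrite /rfun comp1r.
Qed.

Lemma canp_Ract z x w y (c : A w y) (t : btensor A z x w) :
  canp A z x y (Ract c t) = Gact c (canp A z x w t).
Proof.
rewrite canpE /Ract tlift_comp; last exact: canp_lin.
rewrite canpE tlift_comp; last exact: Gact_lin.
apply: tlift_ext => l r; rewrite /rfun tlift_tmul; last exact: fcan_bal.
rewrite /fcan /Gact.
rewrite tlift_comp; last by apply: tlift_lin; exact: gfun_bal.
apply: tlift_ext => a0 a1; rewrite tlift_tmul; last exact: gfun_bal.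
by rewrite /gfun (@Defs.compA _ _ (acat A)).
Qed.

Lemma Gact_1 z x y (c : A z y) (h : H z x) : Gact c (ktmul (idm A z) h) = ktmul c h.
Proof. by rewrite /Gact tlift_tmul ?/gfun ?comp1l //; exact: gfun_bal. Qed.

Lemma tlift_rhoK z x (a : A z x) : tlift (fun a0 a1 => ktmul a0 a1) (rho A a) = rho A a.
Proof. exact: tlift_tmulK. Qed.

Lemma canp_1 z x (a : A z x) : canp A z x x (btmul a (idm A x)) = rho A a.
Proof.
rewrite canp_tmul /fcan -[RHS]tlift_rhoK; apply: tlift_ext => u v.
by rewrite /gfun comp1r.
Qed.

End Main.

Unset Implicit Arguments.

Theorem theorem3p12 (k : comPzRingType) (X : Type) (H : semiHopfCat k X)
    (A : comodCat H) :
  [<-> (* (1) *)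
       (forall x y z : X, bijective (canp A z x y));
       (* (2) *)
       (forall x z : X,
          bijective (canp A z x z) /\
          exists g : ktensor (A z x) (H z x) -> btensor A z x x,
            cancel (canp A z x x) g);
       (* (3) *)
       (forall x z : X,
          exists gam : H z x -> btensor A z x z,
            (forall (c : k) (h h' : H z x), gam (c *: h + h') = c *: gam h + gam h')
            /\ (forall h : H z x, canp A z x z (gam h) = ktmul (idm A z) h)
            /\ (forall a : A z x,
                  tlift (fun (a0 : A z x) (a1 : H z x) =>
                           tlift (fun (l : A z x) (r : A x z) =>
                                    btmul (A := A) l (kcomp A r a0)) (gam a1))
                        (rho A a)
                  = btmul (A := A) a (idm A x)))].
Proof.
tfae.
- move=> H1 x z; split; first exact: H1.
  by case: (H1 x x z) => g Hg _; exists g.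
- move=> H2 x z.
  case: (H2 x z) => [[g Hg1 Hg2] [g' Hg']].
  have glin : linP g.
    move=> c u v; apply: (can_inj Hg1).
    by rewrite Hg2 canp_lin !Hg2.
  exists (fun h => g (ktmul (idm A z) h)).
  split; first by move=> c h h'; rewrite ktmulDr glin.
  split; first by move=> h; exact: Hg2.
  move=> a; apply: (can_inj Hg'); rewrite canp_1.
  rewrite tlift_comp; last exact: canp_lin.
  rewrite -[RHS]tlift_rhoK; apply: tlift_ext => a0 a1.
  rewrite (_ : tlift _ _ = Ract a0 (g (ktmul (idm A z) a1))) //.
  by rewrite canp_Ract Hg2 Gact_1.
- move=> H3 x y z.
  case: (H3 x z) => gam [glin [Hc Hr]].
  have inv_bal : bal_bilinear (fun (_ : unit) (u : A z y) => u)
      (fun (_ : unit) (v : H z x) => v) (fun b h => Ract b (gam h)).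
    apply: kbal => c u u' v; first exact: Ract_linc.
    by rewrite glin Ract_lin.
  pose inv : ktensor (A z y) (H z x) -> btensor A z x y :=
    tlift (fun (b : A z y) (h : H z x) => Ract b (gam h)).
  exists inv.
  + move=> t; rewrite canpE /inv tlift_comp; last exact: tlift_lin.
    rewrite -[RHS]tlift_tmulK; apply: tlift_ext => a a'.
    transitivity (Ract a' (tlift (fun a0 a1 => Ract a0 (gam a1)) (rho A a))).
      rewrite /fcan tlift_comp; last exact: tlift_lin.
      rewrite tlift_comp; last exact: Ract_lin.
      apply: tlift_ext => u v; rewrite /gfun tlift_tmul //.
      by rewrite Ract_comp.
    rewrite (_ : tlift _ (rho A a) = btmul a (idm A x)); last exact: Hr.
    by rewrite Ract_tmul comp1l.
  + move=> t; rewrite /inv tlift_comp; last exact: canp_lin.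
    rewrite -[RHS]tlift_tmulK; apply: tlift_ext => b h.
    by rewrite canp_Ract Hc Gact_1.
Qed.
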